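(* Let $L$ be a CW-complex (not necessarily quasi-finite) with the soft map property. Then every $L$-connected pair $V\subset U$ of metrizable spaces admits an $L$-extension.
   Context: All spaces are metrizable and maps continuous. For spaces $X,Y$, $A\subset X$, $g\colon A\to Y$: $Y\in ANE(g,A,X)$ means $g$ extends continuously to a neighborhood $U$ of $A$ for which there is a continuous $h\colon X\to[0,1]$ with $h^{-1}((0,1])=U$, $h(A)=\{1\}$; $Y\in AE(g,A,X)$ means the same with $U=X$. For a CW-complex $L$, $\mathrm{e\text{-}dim}\,X\leq L$ means $L\in AE(g,A,X)$ for every closed $A\subset X$ and every $g\colon A\to L$ with $L\in ANE(g,A,X)$. A pair $V\subset U$ is $L$-connected if for every metrizable $Z$ with $\mathrm{e\text{-}dim}\,Z\leq L$, every closed $A\subset Z$ and every map $g\colon A\to V$, $g$ extends to a map $Z\to U$. A space $X$ is an $AE(L)$ if for every metrizable $Z$ with $\mathrm{e\text{-}dim}\,Z\leq L$ and closed $A\subset Z$, every map $A\to X$ extends over $Z$. A map $f\colon X\to Y$ is $L$-soft if for any metrizable $Z$ with $\mathrm{e\text{-}dim}\,Z\leq L$, any closed $A\subset Z$ and any maps $h\colon Z\to Y$, $g\colon A\to X$ with $f\circ g=h|A$, there is $\bar g\colon Z\to X$ extending $g$ with $f\circ\bar g=h$. $L$ has the soft map property if for every metrizable space $X$ there is a metrizable space $Y$ with $\mathrm{e\text{-}dim}\,Y\leq L$ and an $L$-soft map from $Y$ onto $X$. A pair of spaces $\tilde V\subset\tilde U$ is an $L$-extension of the pair $V\subset U$ if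 $\tilde U\in AE(L)$ and there is a map $q\colon\tilde U\to U$ such that $q|\tilde V$ is an $L$-soft map of $\tilde V$ onto $V$. *)

(* Defs.v *)
From HB Require Import structures.
From mathcomp Require Import all_boot all_order all_algebra.
From mathcomp Require Import all_classical all_reals all_analysis.
From mathcomp Require Import Rstruct Rstruct_topology.
From Stdlib Require Import Reals.

Set Implicit Arguments.
Unset Strict Implicit.
Unset Printing Implicit Defensive.
Import Order.TTheory GRing.Theory Num.Theory.
Local Open Scope classical_set_scope.
Local Open Scope ring_scope.

(* Subsets A : set X are regarded as spaces via the sigma type [set_type A]
   carrying the subspace (initial) topology of the inclusion. *)

Definition metrizable (T : topologicalType) : Prop :=
  exists d : T -> T -> Rdefinitions.R,
    (forall x y, 0 <= d x y) /\
    (forall x y, d x y = 0 <-> x = y) /\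
    (forall x y, d x y = d y x) /\
    (forall x y z, d x z <= d x y + d y z) /\
    (forall A : set T, open A <->
       (forall x, A x -> exists2 e : Rdefinitions.R, 0 < e &
          forall y, d x y < e -> A y)).

Definition sqnorm (n : nat) (v : 'rV[Rdefinitions.R]_n) : Rdefinitions.R :=
  \sum_(i < n) (v ord0 i) ^+ 2.
Definition cdisk (n : nat) : set 'rV[Rdefinitions.R]_n := [set v | sqnorm v <= 1].
Definition odisk (n : nat) : set 'rV[Rdefinitions.R]_n := [set v | sqnorm v < 1].
Definition sphere (n : nat) : set 'rV[Rdefinitions.R]_n := [set v | sqnorm v = 1].
Arguments cdisk n : clear implicits.
Arguments odisk n : clear implicits.
Arguments sphere n : clear implicits.

(** CW-complex (Whitehead): a Hausdorff space with a family of cells given by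
    characteristic maps Phi_i : D^(d i) -> X such that
    - each Phi_i is continuous on the closed disk;
    - Phi_i restricted to the open disk is a homeomorphism onto the cell
      e_i = Phi_i(open disk) (injective, and relatively open sets go to
      relatively open sets);
    - the cells partition X;
    - closure finiteness: Phi_i(sphere) lies in finitely many cells of
      dimension < d i;
    - weak topology: A is closed iff A meets each closed cell Phi_i(D) in a
      relatively closed set. *)
Definition is_CW_complex (X : topologicalType) : Prop :=
  hausdorff_space X /\
  exists (I : Type) (d : I -> nat) (Phi : forall i : I, 'rV[Rdefinitions.R]_(d i) -> X),
    let cell := fun i => Phi i @` odisk (d i) in
    (forall i, {within cdisk (d i), continuous (Phi i)}) /\
    (forall i u v, odisk (d i) u -> odisk (d i) v -> Phi i u = Phi i v -> u = v) /\
    (forall i (W : set 'rV[Rdefinitions.R]_(d i)), open W ->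
       exists O : set X, open O /\ Phi i @` (W `&` odisk (d i)) = O `&` cell i) /\
    (forall x : X, exists! i, cell i x) /\
    (forall i : I, exists F : set I, finite_set F /\ (forall j, F j -> leq (d j).+1 (d i)) /\
        Phi i @` sphere (d i) `<=` \bigcup_(j in F) cell j) /\
    (forall A : set X,
       (forall i, exists C : set X, closed C /\
           A `&` (Phi i @` cdisk (d i)) = C `&` (Phi i @` cdisk (d i))) ->
       closed A).

Definition ANE_for (Y X : topologicalType) (A : set X) (g : set_type A -> Y) : Prop :=
  exists (h : X -> Rdefinitions.R) (G : set_type [set x | 0 < h x] -> Y),
    continuous h /\ (forall x, 0 <= h x <= 1) /\
    (forall a : set_type A, h (\val a) = 1) /\
    continuous G /\
    (forall (x : set_type [set x | 0 < h x]) (a : set_type A),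
        \val x = \val a -> G x = g a).

Definition AE_for (Y X : topologicalType) (A : set X) (g : set_type A -> Y) : Prop :=
  exists G : X -> Y, continuous G /\ (forall a : set_type A, G (\val a) = g a).

Definition edim_le (X L : topologicalType) : Prop :=
  forall (A : set X), closed A -> forall g : set_type A -> L, continuous g ->
    ANE_for g -> AE_for g.

Definition L_connected (L U : topologicalType) (V : set U) : Prop :=
  forall Z : topologicalType, metrizable Z -> edim_le Z L ->
  forall A : set Z, closed A -> forall g : set_type A -> set_type V, continuous g ->
  exists G : Z -> U, continuous G /\ (forall a : set_type A, G (\val a) = \val (g a)).

Definition AE_L (L X : topologicalType) : Prop :=
  forall Z : topologicalType, metrizable Z -> edim_le Z L ->
  forall A : set Z, closed A -> forall g : set_type A -> X, continuous g ->
  exists G : Z -> X, continuous G /\ (forall a : set_type A, G (\val a) = g a).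

Definition L_soft (L X Y : topologicalType) (f : X -> Y) : Prop :=
  forall Z : topologicalType, metrizable Z -> edim_le Z L ->
  forall A : set Z, closed A -> forall (h : Z -> Y) (g : set_type A -> X),
    continuous h -> continuous g -> (forall a : set_type A, f (g a) = h (\val a)) ->
  exists gb : Z -> X, continuous gb /\ (forall a : set_type A, gb (\val a) = g a) /\
    (forall z, f (gb z) = h z).

Definition soft_map_property (L : topologicalType) : Prop :=
  forall X : topologicalType, metrizable X ->
  exists (Y : topologicalType) (f : Y -> X),
    metrizable Y /\ edim_le Y L /\ continuous f /\ (forall x, exists y, f y = x) /\ L_soft L f.

Definition L_extension (L U : topologicalType) (V : set U) : Prop :=
  exists (Ut : topologicalType) (Vt : set Ut) (q : Ut -> U),
    metrizable Ut /\ AE_L L Ut /\ continuous q /\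
    exists qV : set_type Vt -> set_type V,
      (forall x : set_type Vt, \val (qV x) = q (\val x)) /\
      (forall v, exists x, qV x = v) /\ L_soft L qV.

(* Main.v *)
Require Import Defs.
From HB Require Import structures.
From mathcomp Require Import all_boot all_order all_algebra.
From mathcomp Require Import all_classical all_reals all_analysis.
From mathcomp Require Import Rstruct Rstruct_topology.
From mathcomp Require Import ring lra.
Set Implicit Arguments.
Unset Strict Implicit.
Unset Printing Implicit Defensive.
Import Order.TTheory GRing.Theory Num.Theory.
Local Open Scope classical_set_scope.
Local Open Scope ring_scope.
Local Notation R := Rdefinitions.R.


Definition supf (I : Type) (F : I -> R) : R := sup (range F).

Lemma supf_ub (I : Type) (F : I -> R) M : (forall i, F i <= M) -> forall i, F i <= supf F.
Proof.
move=> hM i; apply: sup_upper_bound; last by exists i.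
by split; [exists (F i), i | exists M => _ [j _ <-]].
Qed.

Lemma supf_le (I : Type) (F : I -> R) c (i0 : I) : (forall i, F i <= c) -> supf F <= c.
Proof. by move=> h; apply: ge_sup; [exists (F i0), i0| move=> _ [j _ <-]]. Qed.

Lemma supf_adh (I : Type) (F : I -> R) M (i0 : I) e :
  (forall i, F i <= M) -> 0 < e -> exists i, supf F - e < F i.
Proof.
move=> hM e0; have [] := @sup_adherent _ (range F) e e0.
  by split; [exists (F i0), i0 | exists M => _ [j _ <-]].
by move=> _ [i _ <-] h; exists i.
Qed.

Definition inff (I : Type) (F : I -> R) : R := - supf (fun i => - F i).

Lemma inff_lb (I : Type) (F : I -> R) m : (forall i, m <= F i) -> forall i, inff F <= F i.
Proof.
move=> hm i; rewrite /inff lerNl; apply: (@supf_ub _ (fun i => - F i) (- m)) => j.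
by rewrite lerN2.
Qed.

Lemma inff_ge (I : Type) (F : I -> R) c (i0 : I) : (forall i, c <= F i) -> c <= inff F.
Proof.
move=> h; rewrite /inff lerNr; apply: (supf_le i0) => j; by rewrite lerN2.
Qed.

Lemma inff_adh (I : Type) (F : I -> R) m (i0 : I) e :
  (forall i, m <= F i) -> 0 < e -> exists i, F i < inff F + e.
Proof.
move=> hm e0; have [|i hi] := @supf_adh _ (fun i => - F i) (- m) i0 e _ e0.
  by move=> j; rewrite lerN2.
by exists i; rewrite /inff; lra.
Qed.

Lemma inff_lip (I : Type) (F G : I -> R) m c (i0 : I) :
  (forall i, m <= F i) -> (forall i, m <= G i) -> (forall i, `|F i - G i| <= c) ->
  `|inff F - inff G| <= c.
Proof.
move=> hF hG h; rewrite ler_norml.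
have h1 : inff F - c <= inff G.
  apply: (inff_ge i0) => i; have := inff_lb hF i; have := h i; rewrite ler_norml.
  move=> /andP[? ?]; lra.
have h2 : inff G - c <= inff F.
  apply: (inff_ge i0) => i; have := inff_lb hG i; have := h i; rewrite ler_norml.
  move=> /andP[? ?]; lra.
apply/andP; split; lra.
Qed.

Definition is_metric (T : topologicalType) (d : T -> T -> R) : Prop :=
    (forall x y, 0 <= d x y) /\
    (forall x y, d x y = 0 <-> x = y) /\
    (forall x y, d x y = d y x) /\
    (forall x y z, d x z <= d x y + d y z) /\
    (forall A : set T, open A <->
       (forall x, A x -> exists2 e : R, 0 < e &
          forall y, d x y < e -> A y)).

Section Metric.
Variables (T : topologicalType) (d : T -> T -> R) (hd : is_metric d).

Lemma md_ge0 x y : 0 <= d x y. Proof. by case: hd. Qed.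
Lemma md_xx x : d x x = 0. Proof. by case: hd => _ [h _]; apply/h. Qed.
Lemma md_eq x y : d x y = 0 -> x = y. Proof. by case: hd => _ [h _]; move/h. Qed.
Lemma md_sym x y : d x y = d y x. Proof. by case: hd => _ [_ [h _]]. Qed.
Lemma md_tri x y z : d x z <= d x y + d y z. Proof. by case: hd => _ [_ [_ [h _]]]. Qed.
Lemma md_open (A : set T) : open A <->
       (forall x, A x -> exists2 e : R, 0 < e & forall y, d x y < e -> A y).
Proof. by case: hd => _ [_ [_ [_ h]]]. Qed.

Lemma md_ball_open x e : open [set y | d x y < e].
Proof.
apply/md_open => y /= hy; exists (e - d x y); first lra.
move=> z hz; have := md_tri x y z; lra.
Qed.

Lemma md_cont_in (X : topologicalType) (f : X -> T) :
  (forall x e, 0 < e -> exists OO, [/\ open OO, OO x & forall y, OO y -> d (f x) (f y) < e]) ->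
  continuous f.
Proof.
move=> H; apply/continuousP => A oA; rewrite openE => x /= Ax.
have [e e0 he] := (md_open A).1 oA _ Ax.
have [OO [oO Ox hO]] := H x e e0.
rewrite /interior; apply: (filterS _ (@open_nbhs_nbhs _ x OO (conj oO Ox))).
by move=> y /hO /he.
Qed.

Lemma val_cont (B : set T) : continuous (set_val : set_type B -> T).
Proof. by apply/continuousP => OO oO; exists OO. Qed.

Lemma cont_into_sub (X : topologicalType) (B : set T) (h : X -> set_type B) :
  continuous (set_val \o h) -> continuous h.
Proof.
move=> hc; apply/continuousP => S [OO oO <-].
exact: ((continuousP _).1 hc OO oO).
Qed.

End Metric.

Section Metric2.
Variables (Z : topologicalType) (rho : Z -> Z -> R) (hr : is_metric rho).
Variables (Y : topologicalType) (D : Y -> Y -> R) (hD : is_metric D).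

Lemma md_cont_out (f : Z -> Y) : continuous f ->
  forall x e, 0 < e -> exists2 del, 0 < del & forall y, rho x y < del -> D (f x) (f y) < e.
Proof.
move=> fc x e e0.
have oB := (continuousP _).1 fc _ (md_ball_open hD (f x) e).
have [del del0 hdel] := (md_open hr _).1 oB x (eq_ind_r (fun r => r < e) e0 (md_xx hD (f x))).
by exists del.
Qed.

Lemma md_cont_out_sub (A : set Z) (f : set_type A -> Y) : continuous f ->
  forall a e, 0 < e -> exists2 del, 0 < del &
    forall b, rho (set_val a) (set_val b) < del -> D (f a) (f b) < e.
Proof.
move=> fc a e e0.
have [OO oO hO] := (continuousP _).1 fc _ (md_ball_open hD (f a) e).
have Oa : OO (set_val a).
  have : (f @^-1` [set y | D (f a) y < e]) a by rewrite /= md_xx.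
  by rewrite -hO.
have [del del0 hdel] := (md_open hr _).1 oO _ Oa.
exists del => // b /hdel Ob.
have : (set_val @^-1` OO) b by [].
by rewrite hO.
Qed.

Lemma md_cont_full (f : Z -> Y) :
  (forall x e, 0 < e -> exists2 del, 0 < del & forall y, rho x y < del -> D (f x) (f y) < e) ->
  continuous f.
Proof.
move=> H; apply: (md_cont_in hD) => x e e0.
have [del del0 hdel] := H x e e0.
exists [set y | rho x y < del]; split => //; first exact: md_ball_open.
by rewrite /= md_xx.
Qed.

Lemma md_cont_sub (A : set Z) (f : set_type A -> Y) :
  (forall a e, 0 < e -> exists2 del, 0 < del &
    forall b, rho (set_val a) (set_val b) < del -> D (f a) (f b) < e) ->
  continuous f.
Proof.
move=> H; apply/continuousP => OO oO.
pose W := [set z | exists a : set_type A, exists2 del, 0 < del &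
   (forall b, rho (set_val a) (set_val b) < del -> OO (f b)) /\ rho (set_val a) z < del].
exists W.
  apply/(md_open hr) => z [a [del del0 [hb hz]]].
  exists (del - rho (set_val a) z); first lra.
  move=> y hy; exists a; exists del => //; split => //.
  have := md_tri hr (set_val a) z y; lra.
apply/seteqP; split => b /=.
  by move=> [a [del del0 [hb /hb]]].
move=> Ob.
have [e e0 he] := (md_open hD _).1 oO _ Ob.
have [del del0 hdel] := H b e e0.
exists b; exists del => //; split; last by rewrite md_xx.
by move=> c /hdel /he.
Qed.

End Metric2.


Definition kap (U : topologicalType) (V : set U) (d : U -> U -> R) (x : U)
  (o : option (set_type V)) : R :=
  match o with None => 1 | Some g => 1 + Num.min (d x (set_val g)) 1 end.

Definition Pf (U : topologicalType) (V : set U) (d : U -> U -> R)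
  (f : option (set_type V) -> R) : Prop :=
  (forall o, 1 <= f o <= 2) /\ (1 < f None \/ exists x : set_type V, f = kap d (set_val x)).

Record ET (U : topologicalType) (V : set U) (d : U -> U -> R) :=
  MkET { etf :> option (set_type V) -> R; etP : Pf d etf }.

HB.instance Definition _ (U : topologicalType) (V : set U) (d : U -> U -> R) :=
  gen_eqMixin (ET V d).
HB.instance Definition _ (U : topologicalType) (V : set U) (d : U -> U -> R) :=
  gen_choiceMixin (ET V d).

Section ETsec.
Variables (U : topologicalType) (V : set U) (d : U -> U -> R).
Local Notation E := (ET V d).

Definition Dm (f g : E) : R := supf (fun o => `|f o - g o|).

Lemma et_bnd (f : E) o : 1 <= f o <= 2.
Proof. by case: f => f [h _] /=; exact: h. Qed.

Lemma et_diff (f g : E) o : `|f o - g o| <= 1.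
Proof.
have /andP[? ?] := et_bnd f o; have /andP[? ?] := et_bnd g o.
rewrite ler_norml; apply/andP; split; lra.
Qed.

Lemma D_ge (f g : E) o : `|f o - g o| <= Dm f g.
Proof. exact: (@supf_ub _ (fun o => `|f o - g o|) 1 (et_diff f g)). Qed.

Lemma D_le (f g : E) c : (forall o, `|f o - g o| <= c) -> Dm f g <= c.
Proof. exact: (supf_le None). Qed.

Lemma ET_eq (f g : E) : (forall o, f o = g o) -> f = g.
Proof.
case: f => f fP; case: g => g gP /= h.
have efg : f = g by apply: funext.
subst g; congr MkET; exact: Prop_irrelevance.
Qed.

Lemma D_ge0 f g : 0 <= Dm f g.
Proof. exact: le_trans (normr_ge0 _) (D_ge f g None). Qed.

Lemma D_xx f : Dm f f = 0.
Proof.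
apply/eqP; rewrite eq_le D_ge0 andbT; apply: D_le => o; by rewrite subrr normr0.
Qed.

Lemma D_eq f g : Dm f g = 0 -> f = g.
Proof.
move=> h; apply: ET_eq => o; have := D_ge f g o; rewrite h.
by rewrite normr_le0 subr_eq0 => /eqP.
Qed.

Lemma D_sym f g : Dm f g = Dm g f.
Proof.
apply/eqP; rewrite eq_le; apply/andP; split; apply: D_le => o;
  by rewrite distrC D_ge.
Qed.

Lemma D_tri f g h : Dm f h <= Dm f g + Dm g h.
Proof.
apply: D_le => o; apply: le_trans (ler_distD (g o) (f o) (h o)) _.
by apply: lerD; apply: D_ge.
Qed.

Definition ETop (A : set E) : Prop :=
  forall x, A x -> exists2 e : R, 0 < e & forall y, Dm x y < e -> A y.

Lemma ETopT : ETop setT.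
Proof. by move=> x _; exists 1. Qed.

Lemma ETopI : setI_closed ETop.
Proof.
move=> A B hA hB x [Ax Bx].
have [e1 e10 h1] := hA x Ax; have [e2 e20 h2] := hB x Bx.
exists (Num.min e1 e2); first by rewrite lt_min e10 e20.
by move=> y; rewrite lt_min => /andP[/h1 ? /h2 ?].
Qed.

Lemma ETop_bigU (I : Type) (f : I -> set E) : (forall i, ETop (f i)) ->
  ETop (\bigcup_i f i).
Proof.
move=> hf x [i _ fxi]; have [e e0 he] := hf i x fxi.
by exists e => // y /he fiy; exists i.
Qed.

End ETsec.

HB.instance Definition _ (U : topologicalType) (V : set U) (d : U -> U -> R) :=
  isOpenTopological.Build (ET V d) (@ETopT U V d) (@ETopI U V d) (@ETop_bigU U V d).

Section ETsec2.
Variables (U : topologicalType) (V : set U) (d : U -> U -> R).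
Local Notation E := (ET V d).

Lemma ET_openE (A : set E) : open A <-> ETop A.
Proof. by []. Qed.

Lemma ET_metric : is_metric (@Dm U V d).
Proof.
split; first exact: D_ge0.
split; first by move=> x y; split; [exact: D_eq | move=> ->; exact: D_xx].
split; first exact: D_sym.
split; first exact: D_tri.
by move=> A; rewrite ET_openE.
Qed.

Lemma ET_metrizable : metrizable E.
Proof. by exists (@Dm U V d); exact: ET_metric. Qed.

End ETsec2.


Lemma min1_lip (a b : R) : `|Num.min a 1 - Num.min b 1| <= `|a - b|.
Proof.
have h1 := ler_norm (a - b); have h2 := ler_norm (b - a); rewrite distrC in h2.
have [ha|ha] := leP a 1; have [hb|hb] := leP b 1;
  rewrite ?(min_l ha) ?(min_r (ltW ha)) ?(min_l hb) ?(min_r (ltW hb));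
  rewrite ler_norml; apply/andP; split; lra.
Qed.

Lemma min1_bnd (a : R) : 0 <= a -> 0 <= Num.min a 1 <= 1.
Proof.
move=> a0; have [ha|ha] := leP a 1; rewrite ?(min_l ha) ?(min_r (ltW ha));
  apply/andP; split; lra.
Qed.

Section J.
Variables (U : topologicalType) (V : set U) (d : U -> U -> R) (hd : is_metric d).
Local Notation E := (ET V d).

Lemma kap_bnd (x : U) (o : option (set_type V)) : 1 <= kap d x o <= 2.
Proof.
case: o => [g|] /=; last by apply/andP; split; lra.
have /andP[? ?] := min1_bnd (md_ge0 hd x (set_val g)); apply/andP; split; lra.
Qed.

Definition jmP (x : set_type V) : Pf d (kap d (set_val x)) :=
  conj (kap_bnd (set_val x)) (or_intror (ex_intro _ x erefl)).

Definition jm (x : set_type V) : E := MkET (jmP x).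

Lemma jm_None x : jm x None = 1.
Proof. by []. Qed.

Lemma dist_lip (x y z : U) : `|d x z - d y z| <= d x y.
Proof.
have := md_tri hd x y z; have := md_tri hd y x z; rewrite (md_sym hd y x) => ? ?.
rewrite ler_norml; apply/andP; split; lra.
Qed.

Lemma jm_lip x y : Dm (jm x) (jm y) <= d (set_val x) (set_val y).
Proof.
apply: D_le => -[g|] /=; last by rewrite subrr normr0 md_ge0.
have -> : forall a b : R, 1 + a - (1 + b) = a - b by move=> a b; lra.
exact: le_trans (min1_lip _ _) (dist_lip _ _ _).
Qed.

Lemma jm_lb x y : Num.min (d (set_val x) (set_val y)) 1 <= Dm (jm x) (jm y).
Proof.
have := D_ge (jm x) (jm y) (Some y) => /=; rewrite md_xx // (min_l ler01).
have /andP[h0 _] := min1_bnd (md_ge0 hd (set_val x) (set_val y)).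
have -> : forall a : R, 1 + a - (1 + 0) = a by move=> a; lra.
by rewrite ger0_norm.
Qed.

Lemma jm_inj : injective jm.
Proof.
move=> x y h; have := jm_lb x y; rewrite h D_xx; clear h.
have h0 := md_ge0 hd (set_val x) (set_val y).
have [ha|ha] := leP (d (set_val x) (set_val y)) 1.
  move=> h1.
  have h2 : d (set_val x) (set_val y) = 0 by lra.
  by move: (md_eq hd h2) => /val_inj.
move=> h1; exfalso; lra.
Qed.

Lemma jm_cont : continuous jm.
Proof.
apply: (md_cont_sub hd (@ET_metric U V d)) => a e e0.
by exists e => // b hb; exact: le_lt_trans (jm_lip a b) hb.
Qed.

Lemma ET_jchar (f : E) : f None <= 1 -> exists x, f = jm x.
Proof.
case: f => f [hb [h|[x hx]]] /= h1; first lra.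
by exists x; apply: ET_eq => o /=; rewrite hx.
Qed.

Lemma O1_open : open [set f : E | 1 < f None].
Proof.
apply/ET_openE => f /= hf; exists (f None - 1); first lra.
move=> g hg; have := D_ge f g None; rewrite ler_norml => /andP[? ?]; lra.
Qed.

End J.


Lemma min_lip2 (a b c d u : R) : `|a - c| <= u -> `|b - d| <= u ->
  `|Num.min a b - Num.min c d| <= u.
Proof.
rewrite !ler_norml => /andP[? ?] /andP[? ?].
have [h1|h1] := leP a b; have [h2|h2] := leP c d; apply/andP; split; lra.
Qed.

Lemma max_lip2 (a b c d u : R) : `|a - c| <= u -> `|b - d| <= u ->
  `|Num.max a b - Num.max c d| <= u.
Proof.
rewrite !ler_norml => /andP[? ?] /andP[? ?].
have [h1|h1] := leP a b; have [h2|h2] := leP c d; apply/andP; split; lra.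
Qed.

Lemma psi_lip (x y s t e : R) : 0 < s -> 0 < t -> 0 <= y -> `|x - y| <= e -> `|s - t| <= e ->
  `|Num.min x (2 * s) / s - Num.min y (2 * t) / t| <= 4 * e / s.
Proof.
move=> s0 t0 y0 hxy hst.
have e0 : 0 <= e by exact: le_trans (normr_ge0 _) hxy.
set x' := Num.min x (2 * s); set y' := Num.min y (2 * t).
have hxy' : `|x' - y'| <= 2 * e.
  apply: min_lip2; first by apply: le_trans hxy _; lra.
  rewrite -mulrBr normrM ger0_norm; last lra.
  by rewrite ler_pM2l //; lra.
have hy' : 0 <= y' <= 2 * t by rewrite /y' le_min y0 /= ge_min lexx orbT; lra.
have hw : 0 <= y' / t <= 2.
  apply/andP; split; first by apply: divr_ge0; lra.
  by rewrite ler_pdivrMr //; lra.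
have -> : x' / s - y' / t = (x' - y') / s + (y' / t) * (t - s) / s.
  by field; apply/andP; split; rewrite gt_eqF.
rewrite -mulrDl.
rewrite normrM (gtr0_norm (_ : 0 < s^-1)); last by rewrite invr_gt0.
rewrite ler_pM2r; last by rewrite invr_gt0.
move: hw; set w := y' / t => /andP[w0 w2]; clearbody w x' y'.
move: hxy' hst; rewrite !ler_norml => /andP[k1 k2] /andP[k3 k4].
have h1 : 0 <= w * (e - (t - s)).
  apply: mulr_ge0 => //; lra.
have h2 : 0 <= w * (e + (t - s)) by apply: mulr_ge0; lra.
have h3 : 0 <= (2 - w) * e by apply: mulr_ge0; lra.
apply/andP; split; nra.
Qed.


Section AE.
Variables (U : topologicalType) (V : set U) (d : U -> U -> R).
Local Notation E := (ET V d).
Variables (Z : topologicalType) (rho : Z -> Z -> R) (hr : is_metric rho).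
Variables (A : set Z) (cA : closed A) (g : set_type A -> E) (cg : continuous g).
Variable (a0 : set_type A).

Definition distA (z : Z) : R := inff (fun a : set_type A => rho z (set_val a)).

Lemma distA_ge0 z : 0 <= distA z.
Proof. by apply: (inff_ge a0) => a; exact: md_ge0 hr _ _. Qed.

Lemma distA_le z (a : set_type A) : distA z <= rho z (set_val a).
Proof. exact: (@inff_lb _ (fun a : set_type A => rho z (set_val a)) 0 (fun a => md_ge0 hr _ _)). Qed.

Lemma distA_lip z w : `|distA z - distA w| <= rho z w.
Proof.
apply: (@inff_lip _ (fun a : set_type A => rho z (set_val a))
   (fun a : set_type A => rho w (set_val a)) 0 (rho z w) a0) => a /=.
- exact: (md_ge0 hr z (set_val a)).
- exact: (md_ge0 hr w (set_val a)).
- exact: (dist_lip hr z w (set_val a)).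
Qed.

Lemma distA_A (a : set_type A) : distA (set_val a) = 0.
Proof.
apply/eqP; rewrite eq_le distA_ge0 andbT; have := distA_le (set_val a) a.
by rewrite md_xx.
Qed.

Lemma distA_pos z : ~ A z -> 0 < distA z.
Proof.
move=> nAz; have oC := closed_openC cA.
have [e e0 he] := (md_open hr _).1 oC z nAz.
apply: lt_le_trans e0 _; apply: (inff_ge a0) => a.
rewrite leNgt; apply/negP => /he; apply; exact: set_valP a.
Qed.

Definition psi (z : Z) (a : set_type A) : R :=
  Num.min (rho z (set_val a)) (2 * distA z) / distA z.

Lemma psi_ge0 z (a : set_type A) : 0 <= psi z a.
Proof.
apply: divr_ge0; last exact: distA_ge0.
rewrite le_min md_ge0 //=; apply: mulr_ge0 => //; exact: distA_ge0.
Qed.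

Lemma psi_bnd z (a : set_type A) : 0 < distA z -> 1 <= psi z a <= 2.
Proof.
move=> s0; have := distA_le z a => hs.
rewrite /psi ler_pdivlMr // ler_pdivrMr // mul1r le_min ge_min hs lexx orbT /=.
apply/andP; split; lra.
Qed.

Lemma psi_two z (a : set_type A) : 0 < distA z -> 2 * distA z <= rho z (set_val a) -> psi z a = 2.
Proof. by move=> s0 h; rewrite /psi (min_r h) mulfK // gt_eqF. Qed.

Lemma psi_le z (a : set_type A) : 0 < distA z -> psi z a <= rho z (set_val a) / distA z.
Proof.
move=> s0; rewrite /psi ler_pM2r ?invr_gt0 // ge_min lexx //=.
Qed.

Definition Hf (z : Z) (o : option (set_type V)) : R :=
  Num.min 2 (inff (fun a => g a o + psi z a) - 1).

Lemma fam_ge1 z (o : option (set_type V)) (a : set_type A) : 1 <= g a o + psi z a.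
Proof. have /andP[? ?] := et_bnd (g a) o; have := psi_ge0 z a; lra. Qed.

Lemma Hf_bnd z (o : option (set_type V)) : 0 < distA z -> 1 <= Hf z o <= 2.
Proof.
move=> s0; have h : 2 <= inff (fun a => g a o + psi z a).
  apply: (inff_ge a0) => a; have /andP[? ?] := et_bnd (g a) o.
  have /andP[? ?] := psi_bnd a s0; lra.
rewrite /Hf le_min ge_min lexx /=; apply/andP; split; lra.
Qed.

Definition Gf (z : Z) (o : option (set_type V)) : R :=
  match o with
  | None => Num.max (Hf z None) (1 + Num.min (distA z) 1)
  | Some _ => Hf z o
  end.

Lemma GfP z : 0 < distA z -> Pf d (Gf z).
Proof.
move=> s0; split.
  case=> [x|] /=; first exact: Hf_bnd.
  have /andP[? ?] := Hf_bnd None s0; have /andP[? ?] := min1_bnd (distA_ge0 z).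
  rewrite le_max ge_max; apply/andP; split; first by apply/orP; left.
  by apply/andP; split; lra.
left => /=; rewrite lt_max; apply/orP; right.
have : 0 < Num.min (distA z) 1 by rewrite lt_min s0 ltr01.
lra.
Qed.

Definition Gm (z : Z) : E :=
  match pselect (A z) with
  | left h => g (exist _ z (mem_set h))
  | right h => MkET (GfP (distA_pos h))
  end.

Lemma Gm_inA z (h : A z) : Gm z = g (exist _ z (mem_set h)).
Proof. by rewrite /Gm; case: pselect => [h'|h'] //; congr g; exact: val_inj. Qed.

Lemma Gm_A (a : set_type A) : Gm (set_val a) = g a.
Proof. by rewrite (Gm_inA (set_valP a)); congr g; exact: val_inj. Qed.

Lemma Gm_nA z (h : ~ A z) o : Gm z o = Gf z o.
Proof. by rewrite /Gm; case: pselect => [h'|h'] //. Qed.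

Lemma Gm_cont : continuous Gm.
Proof.
apply: (md_cont_full hr (@ET_metric U V d)) => z e e0.
have [Az|nAz] := pselect (A z).
  pose az : set_type A := exist _ z (mem_set Az).
  have [eta [eta0 eta1 etae]] : exists eta : R, [/\ 0 < eta, eta <= 1 & 4 * eta <= e].
    have [he|he] := leP e 4; [exists (e / 4) | exists 1]; split; lra.
  have [r r0 hr'] := md_cont_out_sub hr (@ET_metric U V d) cg az eta0.
  exists (Num.min (r / 4) eta); first by rewrite lt_min; apply/andP; split; lra.
  move=> w; rewrite lt_min => /andP[hw1 hw2].
  rewrite (Gm_inA Az) -/az.
  have [Aw|nAw] := pselect (A w).
    rewrite (Gm_inA Aw); apply: lt_trans (hr' _ _) _; last lra.
    by rewrite /=; lra.
  have s0 := distA_pos nAw.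
  have hs : distA w <= rho z w.
    by have := distA_le w az; rewrite /= (md_sym hr w z).
  have key : forall o, `|Hf w o - g az o| <= 2 * eta.
    move=> o.
    have [a' ha'] := @inff_adh _ (fun a : set_type A => rho w (set_val a)) 0 a0 (eta * distA w)
      (fun a => md_ge0 hr _ _) (mulr_gt0 eta0 s0).
    rewrite -/(distA w) in ha'.
    have hes : eta * distA w <= distA w by nra.
    have ha'z : rho z (set_val a') < r.
      have := md_tri hr z w (set_val a'); lra.
    have hga := hr' a' ha'z.
    have hga' := D_ge (g az) (g a') o.
    have hup : Hf w o <= g az o + 2 * eta.
      rewrite /Hf ge_min; apply/orP; right.
      have h1 := inff_lb (fam_ge1 w o) a'.
      have h2 := psi_le a' s0.
      have h3 : rho w (set_val a') / distA w < 1 + eta.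
        by rewrite ltr_pdivrMr //; lra.
      move: hga'; rewrite ler_norml => /andP[? ?]; lra.
    have hlo : g az o - eta <= Hf w o.
      rewrite /Hf le_min; apply/andP; split.
        by have /andP[? ?] := et_bnd (g az) o; lra.
      suff : g az o - eta + 1 <= inff (fun a => g a o + psi w a) by lra.
      apply: (inff_ge a0) => b.
      have [hb|hb] := ltP (rho z (set_val b)) r.
        have := hr' b hb; have := D_ge (g az) (g b) o; rewrite ler_norml.
        move=> /andP[? ?] ?; have /andP[? ?] := psi_bnd b s0; lra.
      have h2 : 2 * distA w <= rho w (set_val b).
        have := md_tri hr z w (set_val b); lra.
      rewrite (psi_two s0 h2).
      have /andP[? ?] := et_bnd (g az) o; have /andP[? ?] := et_bnd (g b) o; lra.
    rewrite ler_norml; apply/andP; split; lra.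
  apply: le_lt_trans (_ : Dm (g az) (Gm w) <= 2 * eta) _; last lra.
  apply: D_le => o; rewrite (Gm_nA nAw).
  case: o => [x|] /=; first by rewrite distrC; exact: key.
  have := key None; have /andP[? ?] := et_bnd (g az) None.
  have /andP[? ?] := min1_bnd (distA_ge0 w).
  have : Num.min (distA w) 1 <= distA w by rewrite ge_min lexx.
  rewrite ler_norml => ? /andP[? ?].
  have [hm|hm] := leP (Hf w None) (1 + Num.min (distA w) 1);
    rewrite ler_norml; apply/andP; split; lra.
have s0 := distA_pos nAz.
exists (Num.min (distA z / 2) (Num.min (e * distA z / 8) (e / 2))).
  rewrite !lt_min; apply/andP; split; first lra.
  apply/andP; split; last lra.
  by apply: divr_gt0 => //; apply: mulr_gt0.
move=> w; rewrite !lt_min => /andP[h1 /andP[h2 h3]].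
have hlip := distA_lip z w.
have sw0 : 0 < distA w by move: hlip; rewrite ler_norml => /andP[? ?]; lra.
have nAw : ~ A w.
  move=> Aw; have := distA_A (exist _ w (mem_set Aw)); rewrite /= => h0; lra.
have hpsi : forall a, `|psi z a - psi w a| <= 4 * rho z w / distA z.
  move=> a; apply: psi_lip => //; first exact: md_ge0 hr _ _.
  exact: (dist_lip hr z w (set_val a)).
have hbd : 4 * rho z w / distA z <= e / 2.
  by rewrite ler_pdivrMr //; lra.
have hH : forall o, `|Hf z o - Hf w o| <= 4 * rho z w / distA z.
  move=> o; rewrite /Hf; apply: min_lip2.
    rewrite subrr normr0; apply: divr_ge0 => //; last lra.
    by apply: mulr_ge0 => //; exact: md_ge0 hr _ _.
  have -> : forall x y : R, x - 1 - (y - 1) = x - y by move=> x y; lra.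
  apply: (inff_lip a0 (fam_ge1 z o) (fam_ge1 w o)) => a.
  by rewrite opprD addrACA subrr add0r; exact: hpsi.
apply: le_lt_trans (_ : Dm (Gm z) (Gm w) <= e / 2) _; last lra.
apply: D_le => o; rewrite (Gm_nA nAz) (Gm_nA nAw).
case: o => [x|] /=; first exact: le_trans (hH _) hbd.
apply: max_lip2; first exact: le_trans (hH _) hbd.
have -> : forall x y : R, 1 + x - (1 + y) = x - y by move=> x y; lra.
apply: le_trans (min1_lip _ _) _; lra.
Qed.

End AE.


Lemma top2P (U : topologicalType) (V : set U) (d : U -> U -> R) :
  Pf d (fun _ : option (set_type V) => 2 : R).
Proof. by split; [move=> o; apply/andP; split; lra | left; lra]. Qed.

Lemma ET_AE (U : topologicalType) (V : set U) (d : U -> U -> R)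
  (Z : topologicalType) (rho : Z -> Z -> R) (hr : is_metric rho)
  (A : set Z) (cA : closed A) (g : set_type A -> ET V d) (cg : continuous g) :
  exists G : Z -> ET V d, continuous G /\ forall a, G (set_val a) = g a.
Proof.
have [[a0 _]|nA] := pselect (exists a : set_type A, True).
  exists (Gm hr cA g a0); split; [exact: (Gm_cont cg) | exact: Gm_A].
exists (fun _ => MkET (top2P V d)); split; first exact: cst_continuous.
by move=> a; exfalso; apply: nA; exists a.
Qed.

Unset Implicit Arguments.

Theorem lemma3p9 (L : topologicalType) :
  is_CW_complex L -> soft_map_property L ->
  forall (U : topologicalType) (V : set U),
    metrizable U -> L_connected L V -> L_extension L V.
Proof.
move=> _ hsoft U V [dU hdU] hconn.
have hdU' : is_metric dU := hdU.
have [Y [p [mY [eY [cp [sp_surj sp]]]]]] := hsoft (ET V dU) (ET_metrizable V dU).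
have [dY hdY] := mY.
have hdY' : is_metric dY := hdY.
pose Vt : set Y := ~` (p @^-1` [set f : ET V dU | 1 < f None]).
have cVt : closed Vt.
  apply: open_closedC; apply: ((continuousP _).1 cp); exact: O1_open.
have Vt_char : forall y, Vt y -> exists x, p y = jm hdU' x.
  move=> y hy; apply: ET_jchar; rewrite leNgt; apply/negP => h; exact: hy h.
pose qV : set_type Vt -> set_type V := fun y => projT1 (cid (Vt_char _ (set_valP y))).
have qV_spec : forall y, p (set_val y) = jm hdU' (qV y).
  by move=> y; rewrite /qV; case: cid.
have cqV : continuous qV.
  apply: cont_into_sub; apply: (md_cont_sub hdY' hdU') => y e e0.
  have e10 : 0 < Num.min e 1 by rewrite lt_min e0 ltr01.
  have [del del0 hdel] := md_cont_out hdY' (@ET_metric U V dU) cp (set_val y) e10.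
  exists del => // b /hdel; rewrite !qV_spec => hD.
  have := le_lt_trans (@jm_lb _ _ _ hdU' (qV y) (qV b)) hD => /=.
  rewrite ltNge; apply: contraNT; rewrite -leNgt => h.
  by apply: le_min2.
have surj : forall v, exists y, qV y = v.
  move=> v; have [y hy] := sp_surj (jm hdU' v).
  have hyV : Vt y by rewrite /Vt /= hy jm_None ltxx.
  exists (exist _ y (mem_set hyV)); apply: (@jm_inj _ _ _ hdU'); rewrite -qV_spec /=; exact: hy.
have softqV : L_soft L qV.
  move=> Z mZ eZ A cA h g ch cg hgh.
  have [] := sp Z mZ eZ A cA (jm hdU' \o h) (set_val \o g).
  - by move=> z; apply: continuous_comp; [exact: ch | exact: (@jm_cont _ _ _ hdU')].
  - by move=> a; apply: continuous_comp; [exact: cg | exact: val_cont].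
  - by move=> a /=; rewrite qV_spec hgh.
  move=> gb [cgb [gbA gbp]].
  have gbV : forall z, Vt (gb z).
    move=> z; rewrite /Vt /= gbp.
    have -> : (jm hdU' \o h) z = jm hdU' (h z) by [].
    by rewrite jm_None ltxx.
  exists (fun z => exist _ (gb z) (mem_set (gbV z))); split.
    by apply: cont_into_sub; exact: cgb.
  split.
    by move=> a; apply: val_inj => /=; rewrite gbA.
  by move=> z; apply: (@jm_inj _ _ _ hdU'); rewrite -qV_spec /= gbp.
have aeY : AE_L L Y.
  move=> Z mZ eZ A cA g cg.
  have [rho hrho] := mZ.
  have cpg : continuous (p \o g).
    by move=> a; apply: continuous_comp; [exact: cg | exact: cp].
  have [H [cH hH]] := ET_AE hrho cA cpg.
  have [gb [cgb [gbA _]]] := sp Z mZ eZ A cA H g cH cg (fun a => esym (hH a)).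
  by exists gb.
have [q [cq hq]] := hconn Y mY eY Vt cVt qV cqV.
exists Y, Vt, q; split => //; split => //; split => //.
exists qV; split; first by move=> x; rewrite hq.
by split; [exact: surj | exact: softqV].
Qed.
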